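(* Let $L$ be an $r\times m$ matrix of integers of full rank $r$. There exist $K_L>0$ and $p_0$ depending only on $L$ such that for every prime $p\ge p_0$ and all $p$-measurable sets $A_1,\ldots,A_m\subset\mathbb{T}$, there exist $j_1/p,\ldots,j_K/p\in J(L,p)$ with $K\le K_L$ such that \[S_{L,\mathbb{T}}(A_1,\ldots,A_m)=\sum_{k=1}^{K}\lambda_k\,S_{L,\mathbb{Z}_p}\big(A_1'-j_k(1),\ldots,A_m'-j_k(m)\big),\] where $\lambda_k=p^{m-r}\mu_{L,\mathbb{T}}\big((j_k/p+[0,1/p)^m)\cap\ker_{\mathbb{T}}L\big)$.
   Context: $\mathbb{T}=\mathbb{R}/\mathbb{Z}$, and $\mathbb{T}^m$ is identified with $[0,1)^m$ with coordinatewise addition mod 1. A set $A\subset\mathbb{T}$ is $p$-measurable if it is a union of intervals $[(x-1)/p,x/p)$, $x\in\{1,\ldots,p\}$. For a $p$-measurable $A$, $A'\subset\mathbb{Z}_p$ is defined by $1_{A'}(x)=1_A(x/p)$ (identifying $x\in\mathbb{Z}_p$ with $\{0,\ldots,p-1\}$). For a compact abelian group $G$, $\ker_G L=\{x\in G^m:Lx=0\}$ with normalized Haar probability measure $\mu_{L,G}$, and $S_{L,G}(B_1,\ldots,B_m)=\mu_{L,G}\big((B_1\times\cdots\times B_m)\cap\ker_G L\big)$; for $G=\mathbb{Z}_p$ this is the proportion of elements of $\ker_{\mathbb{Z}_p}L$ lying in $B_1\times\cdots\times B_m$. For $j\in\mathbb{Z}_p^m$ with coordinates $j(i)\in\{0,\ldots,p-1\}$,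 $j/p=(j(1)/p,\ldots,j(m)/p)\in\mathbb{T}^m$; $\Lambda=\{j/p:j\in\mathbb{Z}_p^m\}$ and $J(L,p)=\{j/p\in\Lambda:\ \mu_{L,\mathbb{T}}\big((j/p+[0,1/p)^m)\cap\ker_{\mathbb{T}}L\big)>0\}$. *)

(* Defs.v *)
From HB Require Import structures.
From mathcomp Require Import all_boot all_order all_algebra.
From mathcomp Require Import all_classical all_reals all_analysis.
Set Implicit Arguments. Unset Strict Implicit. Unset Printing Implicit Defensive.
Import Order.TTheory GRing.Theory Num.Theory.
Import numFieldNormedType.Exports.
Local Open Scope classical_set_scope.
Local Open Scope ring_scope.

(* T^m is modelled as [0,1)^m inside R^m = 'rV[R]_m; addition mod 1
   is coordinatewise x + y - floor (x + y). *)

Notation borelRv R m := (g_sigma_algebraType (@open 'rV[R]_m)).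

Definition kerT (R : realType) (r m : nat) (L : 'M[int]_(r, m)) : set 'rV[R]_m :=
  [set x | (forall i, 0 <= x ord0 i < 1) /\
           forall a : 'I_r, exists z : int,
             \sum_(i < m) (L a i)%:~R * x ord0 i = z%:~R].
Arguments kerT R {r m} L.

Definition torus_add (R : realType) (m : nat) (y x : 'rV[R]_m) : 'rV[R]_m :=
  \row_i (x ord0 i + y ord0 i - (Num.floor (x ord0 i + y ord0 i))%:~R).

(* mu is the normalized Haar probability measure of ker_T L:
   a Borel probability concentrated on ker_T L and invariant under
   translations (mod 1) by elements of ker_T L.  By uniqueness of Haar
   measure, such a mu exists and is unique. *)
Definition is_haar_kerT (R : realType) (r m : nat) (L : 'M[int]_(r, m))
    (mu : probability (borelRv R m) R) : Prop :=
  mu (kerT R L) = 1%E /\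
  forall y : 'rV[R]_m, kerT R L y ->
    forall B : set (borelRv R m), measurable B ->
      mu (torus_add y @^-1` B) = mu B.

Definition S_T (R : realType) (r m : nat) (L : 'M[int]_(r, m))
    (mu : probability (borelRv R m) R) (B : 'I_m -> set R) : \bar R :=
  mu ([set x : 'rV[R]_m | forall i, B i (x ord0 i)] `&` kerT R L).

Definition p_measurable (R : realType) (p : nat) (A : set R) : Prop :=
  exists X : {set 'I_p},
    A = [set t | exists x : 'I_p, x \in X /\
                 (x%:R / p%:R <= t /\ t < (x.+1)%:R / p%:R)].

Definition discretize (R : realType) (p : nat) (A : set R) : {set 'I_p} :=
  [set x : 'I_p | `[< A (x%:R / p%:R) >]].
Arguments discretize {R} p A.

Definition zp_shift (p : nat) (B : {set 'I_p}) (c : 'I_p) : {set 'I_p} :=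
  [set x : 'I_p | [exists y in B, nat_of_ord y == ((nat_of_ord x + nat_of_ord c) %% p)%N]].

Definition kerZp (p r m : nat) (L : 'M[int]_(r, m)) : {set {ffun 'I_m -> 'I_p}} :=
  [set x : {ffun 'I_m -> 'I_p} |
     [forall a : 'I_r, (p%:Z %| \sum_(i < m) L a i * (x i)%:Z)%Z]].

Definition S_Zp (R : realType) (p r m : nat) (L : 'M[int]_(r, m))
    (B : 'I_m -> {set 'I_p}) : R :=
  (#|[set x in kerZp p L | [forall i, x i \in B i]]|)%:R / (#|kerZp p L|)%:R.

Definition pbox (R : realType) (p m : nat) (j : 'I_m -> 'I_p) : set 'rV[R]_m :=
  [set x | forall i, (j i)%:R / p%:R <= x ord0 i /\ x ord0 i < (j i).+1%:R / p%:R].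
Arguments pbox R {p m} j.

Definition box_mass (R : realType) (p r m : nat) (L : 'M[int]_(r, m))
    (mu : probability (borelRv R m) R) (j : 'I_m -> 'I_p) : \bar R :=
  mu (pbox R j `&` kerT R L).

Definition in_J (R : realType) (p r m : nat) (L : 'M[int]_(r, m))
    (mu : probability (borelRv R m) R) (j : 'I_m -> 'I_p) : Prop :=
  (0 < box_mass L mu j)%E.
Arguments is_haar_kerT {R r m} L mu.
Arguments S_T {R r m} L mu B.
Arguments S_Zp {R} p {r m} L B.
Arguments box_mass {R p r m} L mu j.
Arguments in_J {R p r m} L mu j.

(* Main.v *)
Require Import Defs.
From HB Require Import structures.
From mathcomp Require Import all_boot all_order all_algebra.
From mathcomp Require Import all_classical all_reals all_analysis.
Import Order.TTheory GRing.Theory Num.Theory.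
Import numFieldNormedType.Exports.
Local Open Scope classical_set_scope.
Local Open Scope ring_scope.
From mathcomp Require Import mxabelem.
From mathcomp Require Import ring lra zify.

Section Meas.
Variables (R : realType) (m : nat).
Local Notation T := (borelRv R m).
Lemma mopen (U : set 'rV[R]_m) : open U -> measurable (U : set T).
Proof. move=> oU. exact: sub_sigma_algebra. Qed.
Lemma coord_cont (i : 'I_m) : continuous (fun x : 'rV[R]_m => x ord0 i).
Proof.
move=> u A /nbhs_ballP[e /= e0 eA].
apply/nbhs_ballP; exists e => //= v [_ uv]; apply: eA; exact: uv.
Qed.
Lemma sum_cont (I : Type) (s : seq I) (g : I -> 'rV[R]_m -> R) :
  (forall i, continuous (g i)) -> continuous (fun x => \sum_(i <- s) g i x).
Proof.
move=> hg; elim: s => [|a s IH].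
  under eq_fun do rewrite big_nil. exact: cst_continuous.
under eq_fun do rewrite big_cons.
move=> x; apply: (@continuousD _ R^o _ (g a) (fun x => \sum_(i <- s) g i x)).
  exact: hg.
exact: IH.
Qed.
Lemma lin_cont (c : 'I_m -> R) : continuous (fun x : 'rV[R]_m => \sum_i c i * x ord0 i).
Proof.
apply: sum_cont => i x; apply: (@continuousM R _ (fun=> c i) (fun x : 'rV[R]_m => x ord0 i)).
  exact: cst_continuous.
exact: coord_cont.
Qed.
Lemma m_lt (f : 'rV[R]_m -> R) c : continuous f -> measurable ([set x | f x < c] : set T).
Proof.
move=> cf; apply: mopen.
have -> : [set x | f x < c] = f @^-1` [set y | y < c] by [].
apply: open_comp => [x _|]; [exact: cf | exact: open_lt].
Qed.
Lemma m_gt (f : 'rV[R]_m -> R) c : continuous f -> measurable ([set x | c < f x] : set T).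
Proof.
move=> cf; apply: mopen.
have -> : [set x | c < f x] = f @^-1` [set y | c < y] by [].
apply: open_comp => [x _|]; [exact: cf | exact: open_gt].
Qed.
Lemma m_ge (f : 'rV[R]_m -> R) c : continuous f -> measurable ([set x | c <= f x] : set T).
Proof.
move=> cf; have -> : [set x | c <= f x] = ~` [set x | f x < c].
  by apply/funext=> x; apply/propext; rewrite /setC /= leNgt; split=> /negP.
by apply: measurableC; apply: m_lt.
Qed.
Lemma m_le (f : 'rV[R]_m -> R) c : continuous f -> measurable ([set x | f x <= c] : set T).
Proof.
move=> cf; have -> : [set x | f x <= c] = ~` [set x | c < f x].
  by apply/funext=> x; apply/propext; rewrite /setC /= leNgt; split=> /negP.
by apply: measurableC; apply: m_gt.
Qed.
Lemma m_eq (f : 'rV[R]_m -> R) c : continuous f -> measurable ([set x | f x = c] : set T).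
Proof.
move=> cf; have -> : [set x | f x = c] = [set x | f x <= c] `&` [set x | c <= f x].
  by apply/seteqP; split => x /=; [move=> ->; rewrite lexx | case=> *; apply/eqP; rewrite eq_le; apply/andP].
by apply: measurableI; [exact: m_le | exact: m_ge].
Qed.
Lemma m_fin (k : nat) (S : 'I_k -> set T) : (forall i, measurable (S i)) ->
  measurable [set x | forall i, S i x].
Proof.
move=> hS; have -> : [set x | forall i, S i x] = \bigcap_(i in [set: 'I_k]) S i.
  by apply/seteqP; split => x /=; [move=> h i _; exact: h| move=> h i; exact: h].
apply: fin_bigcap_measurable => //; exact: finite_setT.
Qed.
Lemma m_int (S : int -> set T) : (forall i, measurable (S i)) ->
  measurable [set x | exists i, S i x].
Proof.
move=> hS; have -> : [set x | exists i, S i x] = \bigcup_(i in [set: int]) S i.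
  by apply/seteqP; split => x /=; [case=> i h; exists i|case=> i _ h; exists i].
apply: countable_bigcupT_measurable => //.
Qed.
End Meas.

Lemma Fp_intr_eq0 (p : nat) (z : int) : prime p ->
  ((z%:~R : 'F_p) == 0) = (p%:Z %| z)%Z.
Proof.
move=> pr; have nat_eq0 : forall n : nat, ((n%:R : 'F_p) == 0) = (p %| n)%N.
  move=> n; apply/eqP/idP => [h|h].
    have := val_Fp_nat pr n; rewrite h /= => /esym/eqP; by rewrite -/(dvdn p n).
  by apply/val_inj; rewrite /= val_Fp_nat //; apply/eqP.
case: z => n.
  by rewrite -pmulrn nat_eq0 /dvdz /=.
by rewrite NegzE mulrNz oppr_eq0 -pmulrn nat_eq0 /dvdz /=.
Qed.
Section CardKer.
Variables (p r m : nat) (L : 'M[int]_(r, m)).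
Hypothesis pr : prime p.
Local Notation F := 'F_p.
Let N : 'M[F]_(m, r) := (map_mx (intr : int -> F) L)^T.
Let phi (x : {ffun 'I_m -> 'I_p}) : 'rV[F]_m := \row_i ((x i)%:R : F).
Lemma phi_inj : injective phi.
Proof.
move=> x y /matrixP h; apply/ffunP => i; have := h 0 i; rewrite !mxE.
move/(congr1 val); rewrite /= !val_Fp_nat // !modn_small //; by move/val_inj.
Qed.
Lemma phiN_entry x a : (phi x *m N) 0 a = ((\sum_(i < m) L a i * (x i)%:Z)%:~R : F).
Proof.
rewrite !mxE rmorph_sum /=; apply: eq_bigr => i _.
by rewrite !mxE rmorphM /= mulrC -pmulrn.
Qed.
Lemma kerZp_phi x : (x \in kerZp p L) = (phi x *m N == 0).
Proof.
rewrite inE; apply/forallP/eqP => [h|h].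
  apply/rowP => a; rewrite phiN_entry mxE; apply/eqP; by rewrite Fp_intr_eq0.
move=> a; rewrite -Fp_intr_eq0 // -phiN_entry h mxE //.
Qed.
Lemma card_kerZp : \rank (map_mx (intr : int -> F) L) = r -> #|kerZp p L| = (p ^ (m - r))%N.
Proof.
move=> hr.
have -> : #|kerZp p L| = #|phi @: kerZp p L| by rewrite card_imset //; exact: phi_inj.
have -> : phi @: kerZp p L = rowg (kermx N).
  apply/setP => v; rewrite mem_rowg sub_kermx; apply/imsetP/idP => [[x hx ->]|hv].
    by rewrite -kerZp_phi.
  exists [ffun i => cast_ord (Fp_cast pr) (v 0 i)].
    rewrite kerZp_phi; suff -> : phi [ffun i => cast_ord (Fp_cast pr) (v 0 i)] = v by [].
    by apply/rowP => i; rewrite !mxE ffunE /= natr_Zp.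
  by apply/rowP => i; rewrite !mxE ffunE /= natr_Zp.
by rewrite card_rowg mxrank_ker mxrank_tr hr card_Fp.
Qed.
End CardKer.
Lemma rank_modp r m (L : 'M[int]_(r, m)) :
  \rank (map_mx (intr : int -> rat) L) = r ->
  exists D : nat, forall p, prime p -> (D < p)%N ->
    \rank (map_mx (intr : int -> 'F_p) L) = r.
Proof.
move=> hr.
have rkA : row_full (map_mx (intr : int -> rat) L)^T by rewrite /row_full mxrank_tr hr.
set f := fullrankfun rkA.
set B : 'M[int]_r := rowsub f L^T.
have hB : forall (K : fieldType), map_mx (intr : int -> K) B = rowsub f (map_mx (intr : int -> K) L)^T.
  by move=> K; apply/matrixP => i j; rewrite !mxE.
have dB : \det B != 0.
  have := fullrowsub_unit rkA; rewrite -/f -hB unitmxE det_map_mx unitfE.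
  by apply: contra => /eqP ->; rewrite rmorph0.
exists `|\det B|%N => p pr ltp; apply/eqP; rewrite eqn_leq rank_leq_row /=.
have uB : map_mx (intr : int -> 'F_p) B \in unitmx.
  rewrite unitmxE det_map_mx unitfE Fp_intr_eq0 //; apply/negP => hd.
  have : (p %| `|\det B|)%N by [].
  move/dvdn_leq; rewrite absz_gt0 dB => /(_ isT); by rewrite leqNgt ltp.
have e := mxrank_unit uB; rewrite hB in e.
apply: (leq_trans (eq_leq (esym e))); rewrite -[X in (_ <= X)%N]mxrank_tr.
exact/mxrankS/rowsub_sub.
Qed.

Arguments mopen {R m}. Arguments coord_cont {R m}. Arguments sum_cont {R m I}.
Arguments lin_cont {R m}. Arguments m_lt {R m}. Arguments m_gt {R m}.
Arguments m_ge {R m}. Arguments m_le {R m}. Arguments m_eq {R m}.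
Arguments m_fin {R m k}. Arguments m_int {R m}.
Definition cell (R : realType) (p : nat) (t : R) (y : nat) :=
  y%:R / p%:R <= t /\ t < y.+1%:R / p%:R.
Arguments cell {R}.
Lemma cell_uniq (R : realType) p (t : R) y z : (0 < p)%N -> cell p t y -> cell p t z -> y = z.
Proof.
move=> p0 [h1 h2] [h3 h4].
have pR : 0 < (p%:R : R) by rewrite ltr0n.
have pi : 0 < (p%:R : R)^-1 by rewrite invr_gt0.
have a : (y < z.+1)%N by rewrite -(ltr_nat R) -(ltr_pM2r pi) (le_lt_trans h1 h4).
have b : (z < y.+1)%N by rewrite -(ltr_nat R) -(ltr_pM2r pi) (le_lt_trans h3 h2).
by apply/eqP; rewrite eqn_leq -ltnS a -ltnS b.
Qed.
Arguments cell_uniq {R p t y z}.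
Lemma cell_exists (R : realType) p (t : R) : (0 < p)%N -> 0 <= t < 1 ->
  exists y : 'I_p, cell p t y.
Proof.
move=> p0 /andP[t0 t1].
have pR : 0 < (p%:R : R) by rewrite ltr0n.
set f := Num.floor (t * p%:R).
have f0 : 0 <= f by rewrite floor_ge0 mulr_ge0 // ltW.
have e : (`|f|%N%:R : R) = f%:~R by rewrite natr_absz ger0_norm.
have fp : (`|f| < p)%N.
  rewrite -(ltr_nat R) e.
  by apply: le_lt_trans (floor_le _) _; rewrite -[X in _ < X]mul1r ltr_pM2r.
exists (Ordinal fp); rewrite /cell /=.
have e1 : ((`|f|%N).+1%:R : R) = (f + 1)%:~R by rewrite -addn1 natrD e rmorphD.
rewrite e e1 !ler_pdivrMr // !ltr_pdivlMr //; split.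
  exact: floor_le.
exact: floorD1_gt.
Qed.
Lemma cell_self (R : realType) p (y : nat) : (0 < p)%N -> cell p (y%:R / p%:R : R) y.
Proof.
move=> p0; split => //; have pi : 0 < (p%:R : R)^-1 by rewrite invr_gt0 ltr0n.
by rewrite ltr_pM2r // ltr_nat.
Qed.
Arguments cell_self {R p} y.
Lemma cell_01 (R : realType) p (t : R) (y : 'I_p) : cell p t y -> 0 <= t < 1.
Proof.
case=> h1 h2; have p0 : (0 < p)%N by apply: leq_ltn_trans (ltn_ord y).
have pR : 0 < (p%:R : R) by rewrite ltr0n.
apply/andP; split.
  by apply: le_trans h1; rewrite divr_ge0.
apply: (lt_le_trans h2); rewrite ler_pdivrMr // mul1r ler_nat; exact: ltn_ord.
Qed.
Lemma pmeas_cell (R : realType) p (A : set R) : p_measurable p A -> (0 < p)%N ->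
  forall (y : 'I_p) t, cell p t y -> (A t <-> y \in discretize p A).
Proof.
move=> [X ->] p0 y t ht; rewrite inE; split.
  case=> x [xX hx]; apply/asboolP; exists x; split => //.
  have -> : y = x by apply: val_inj; exact: (cell_uniq p0 ht hx).
  exact: cell_self.
move/asboolP => [x [xX hx]]; exists x; split => //.
have <- : y = x by apply: val_inj; exact: (cell_uniq p0 (cell_self (R:=R) y p0) hx).
done.
Qed.
Section MeasD.
Variables (R : realType) (r m : nat) (L : 'M[int]_(r, m)).
Local Notation T := (borelRv R m).
Definition Lsum (a : 'I_r) (z : 'rV[R]_m) : R := \sum_(i < m) (L a i)%:~R * z ord0 i.
Definition lincond : set T := [set z | forall a, exists w : int, Lsum a z = w%:~R].
Lemma m_lincond : measurable lincond.
Proof.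
apply: (m_fin (fun a => [set x : T | exists w : int, Lsum a x = w%:~R])) => a.
apply: (m_int (fun w => [set x : T | Lsum a x = w%:~R])) => w.
apply: m_eq; exact: lin_cont.
Qed.
Lemma m_cellf (f : 'rV[R]_m -> R) p y : continuous f ->
  measurable ([set z | cell p (f z) y] : set T).
Proof.
move=> cf; have -> : [set z | cell p (f z) y] = [set z | y%:R / p%:R <= f z] `&` [set z | f z < y.+1%:R / p%:R] by [].
by apply: measurableI; [apply: m_ge | apply: m_lt].
Qed.
Lemma m_unit : measurable ([set z | forall i, 0 <= z ord0 i < 1] : set T).
Proof.
apply: (m_fin (fun i => [set z : T | 0 <= z ord0 i < 1])) => i.
have -> : [set z : T | 0 <= z ord0 i < 1] = [set z | 0 <= z ord0 i] `&` [set z | z ord0 i < 1].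
  by apply/funext => z; apply/propext; split => [/andP[a b]|[a b]]; [split|apply/andP; split].
by apply: measurableI; [apply: m_ge | apply: m_lt]; exact: coord_cont.
Qed.
Lemma kerTE : (kerT R L : set T) = [set z : T | forall i, 0 <= z ord0 i < 1] `&` lincond.
Proof. by []. Qed.
Lemma m_kerT : measurable (kerT R L : set T).
Proof. rewrite kerTE; apply: measurableI; [exact: m_unit | exact: m_lincond]. Qed.
Lemma m_pbox p (j : 'I_m -> 'I_p) : measurable (pbox R j : set T).
Proof.
apply: (m_fin (fun i => [set z : T | cell p (z ord0 i) (j i)])) => i.
apply: m_cellf; exact: coord_cont.
Qed.
End MeasD.

Arguments mopen {R m}. Arguments coord_cont {R m}. Arguments sum_cont {R m I}.
Arguments lin_cont {R m}. Arguments m_lt {R m}. Arguments m_gt {R m}.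
Arguments m_ge {R m}. Arguments m_le {R m}. Arguments m_eq {R m}.
Arguments m_fin {R m k}. Arguments m_int {R m}.
Arguments Lsum {R r m} L a z. Arguments lincond {R r m} L.
Arguments m_lincond {R r m} L. Arguments m_unit {R m}. Arguments m_kerT {R r m} L.
Arguments m_pbox {R m p} j. Arguments cell_exists {R p t}. Arguments pmeas_cell {R p A}. Arguments m_cellf {R m}. Arguments kerTE {R r m} L.
Section Cells2.
Variables (R : realType) (p : nat).
Hypothesis p0 : (0 < p)%N.
Lemma pR : 0 < (p%:R : R). Proof. by rewrite ltr0n. Qed.
Lemma pRneq : (p%:R : R) != 0. Proof. by rewrite gt_eqF // pR. Qed.
Lemma cell_shift {t : R} {a} k : cell p t a -> cell p (t + k%:R / p%:R) (a + k).
Proof.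
case=> h1 h2; split.
  by rewrite natrD mulrDl lerD2r.
by rewrite -addSn natrD mulrDl ltrD2r.
Qed.
Lemma cell_unshift {t : R} {q c : nat} : cell p t (q * p + c) -> cell p (t - q%:R) c.
Proof.
have e : forall c : nat, ((q * p + c)%:R / p%:R : R) = q%:R + c%:R / p%:R.
  move=> c'; rewrite natrD mulrDl natrM mulfK //; exact: pRneq.
case=> h1 h2; split.
  by rewrite lerBrDl -e.
by rewrite ltrBlDl -e addnS.
Qed.
Lemma cell_01n {t : R} {c : nat} : (c < p)%N -> cell p t c -> 0 <= t < 1.
Proof. move=> cp; exact: (@cell_01 R p t (Ordinal cp)). Qed.
Lemma cell_frac {s : R} {c : nat} : cell p s c ->
  Num.floor s = (c %/ p)%:Z /\ cell p (s - (Num.floor s)%:~R) (c %% p).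
Proof.
move=> hs; rewrite (divn_eq c p) in hs.
have h := cell_unshift hs.
have /andP[a b] := cell_01n (ltn_pmod c p0) h.
have fl : Num.floor s = (c %/ p)%:Z.
  apply: floor_def; apply/andP; split.
    by rewrite -subr_ge0.
  by rewrite rmorphD /= -ltrBlDl.
by split => //; rewrite fl.
Qed.
Lemma frac_cell {s : R} {c : nat} {n : int} : (c < p)%N -> cell p (s - n%:~R) c ->
  Num.floor s = n.
Proof.
move=> cp h; have /andP[a b] := cell_01n cp h.
apply: floor_def; apply/andP; split.
  by rewrite -subr_ge0.
by rewrite rmorphD /= -ltrBlDl.
Qed.
End Cells2.
Arguments pR {R p}. Arguments pRneq {R p}. Arguments cell_shift {R p t a} k.
Arguments cell_unshift {R p} p0 {t q c}.
Arguments cell_01n {R p t c}. Arguments cell_frac {R p} p0 {s c}. Arguments frac_cell {R p s c n}.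
Section Transl.
Variables (R : realType) (r m : nat) (L : 'M[int]_(r, m)) (p : nat).
Hypothesis p0 : (0 < p)%N.
Local Notation T := (borelRv R m).
Definition yv (x : 'I_m -> 'I_p) : 'rV[R]_m := \row_i ((x i)%:R / p%:R).
Lemma Lsum_yv (x : 'I_m -> 'I_p) : (forall a, (p%:Z %| \sum_i L a i * (x i)%:Z)%Z) ->
  lincond L (yv x).
Proof.
move=> h a; case/dvdzP: (h a) => q hq; exists q.
have -> : Lsum L a (yv x) = (\sum_i L a i * (x i)%:Z)%:~R / p%:R.
  rewrite rmorph_sum mulr_suml; apply: eq_bigr => i _.
  by rewrite mxE rmorphM /= mulrA -pmulrn.
by rewrite hq rmorphM /= -pmulrn mulfK // pRneq.
Qed.
Lemma yv_kerT (x : 'I_m -> 'I_p) : (forall a, (p%:Z %| \sum_i L a i * (x i)%:Z)%Z) ->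
  kerT R L (yv x).
Proof.
move=> h; split; last exact: Lsum_yv.
move=> i; rewrite mxE; exact: (cell_01n (ltn_ord (x i)) (cell_self (R:=R) (x i) p0)).
Qed.
Lemma Lsum_ta (y z : 'rV[R]_m) a :
  Lsum L a (torus_add y z) = Lsum L a z + Lsum L a y -
     (\sum_i L a i * Num.floor (z ord0 i + y ord0 i))%:~R.
Proof.
rewrite /Lsum rmorph_sum -big_split -sumrB /=; apply: eq_bigr => i _.
by rewrite mxE rmorphM /= mulrBr mulrDr.
Qed.
Lemma ta_lincond (y z : 'rV[R]_m) : lincond L y -> (lincond L (torus_add y z) <-> lincond L z).
Proof.
move=> hy; split => h a; have [wy ey] := hy a; have [w ew] := h a;
  rewrite Lsum_ta ?ey in ew *.
  exists (w - wy + \sum_i L a i * Num.floor (z ord0 i + y ord0 i)).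
  by rewrite !rmorphD /= -ew rmorphN /=; ring.
exists (w + wy - \sum_i L a i * Num.floor (z ord0 i + y ord0 i)).
by rewrite ew !rmorphB /= rmorphD.
Qed.
End Transl.
Arguments yv {R m p} x. Arguments Lsum_yv {R r m} L {p} p0 x. Arguments yv_kerT {R r m} L {p} p0 x.
Arguments ta_lincond {R r m} L y z.
Section Inv.
Variables (R : realType) (r m : nat) (L : 'M[int]_(r, m)) (p : nat).
Hypothesis p0 : (0 < p)%N.
Local Notation T := (borelRv R m).
Lemma coord_shift {t : R} {a : 'I_p} (b : 'I_p) : cell p t a ->
  cell p ((t + b%:R / p%:R) - (Num.floor (t + b%:R / p%:R))%:~R) ((a + b) %% p).
Proof. move=> h; exact: (cell_frac p0 (cell_shift b h)).2. Qed.
Lemma coord_shift_inv {t : R} {a b : 'I_p} : 0 <= t < 1 ->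
  cell p ((t + b%:R / p%:R) - (Num.floor (t + b%:R / p%:R))%:~R) ((a + b) %% p) ->
  cell p t a.
Proof.
move=> t01 h; have [a' ha'] := cell_exists p0 t01.
have h' := coord_shift b ha'.
have e := cell_uniq p0 h' h.
have ea : a' = a.
  apply/val_inj; move/eqP: e; rewrite eqn_modDr !modn_small //; by move/eqP.
by rewrite -ea.
Qed.
Lemma mass_shift (mu : probability T R) (hmu : is_haar_kerT L mu)
    (j0 x j : 'I_m -> 'I_p) :
  (forall a, (p%:Z %| \sum_i L a i * (x i)%:Z)%Z) ->
  (forall i, nat_of_ord (j i) = ((j0 i + x i) %% p)%N) ->
  box_mass L mu j = box_mass L mu j0.
Proof.
move=> hx hj.
set y : 'rV[R]_m := yv x.
have yK : kerT R L y := yv_kerT L p0 x hx.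
have yl : lincond L y := yK.2.
set K : set T := kerT R L.
have mK : measurable K := m_kerT L.
set B : set T := pbox R j `&` K.
have mB : measurable B by apply: measurableI => //; exact: m_pbox.
have eP := hmu.2 y yK B mB.
set P : set T := torus_add y @^-1` B.
have PE : P = [set z : T | forall i, exists n : int,
      cell p (z ord0 i + (y ord0 i - n%:~R)) (j i)] `&` lincond L.
  apply/funext => z; apply/propext; split.
    rewrite /P /B /preimage /= => -[hb [_ hl]]; split.
      move=> i; exists (Num.floor (z ord0 i + y ord0 i)); have := hb i.
      by rewrite mxE addrA.
    by apply/(ta_lincond L y z yl).
  case=> hc hl; rewrite /P /B /preimage /=.
  have hb : forall i, cell p ((torus_add y z) ord0 i) (j i).
    move=> i; have [n hn] := hc i; rewrite addrA in hn.
    by rewrite mxE (frac_cell (ltn_ord (j i)) hn).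
  split => //; split.
    move=> i; exact: (cell_01n (ltn_ord (j i)) (hb i)).
  by apply/(ta_lincond L y z yl).
have mP : measurable P.
  rewrite PE; apply: measurableI; last exact: m_lincond.
  apply: (m_fin (fun i => [set z : T | exists n : int,
      cell p (z ord0 i + (y ord0 i - n%:~R)) (j i)])) => i.
  apply: (m_int (fun n : int => [set z : T | cell p (z ord0 i + (y ord0 i - n%:~R)) (j i)])) => n.
  apply: m_cellf => z.
  apply: (@continuousD _ R^o _ (fun z : 'rV[R]_m => z ord0 i) (fun=> y ord0 i - n%:~R)).
    exact: coord_cont.
  exact: cst_continuous.
have frac01 : forall s : R, 0 <= s - (Num.floor s)%:~R < 1.
  move=> s; have h1 := floor_le s; have h2 := floorD1_gt s.
  rewrite rmorphD /= in h2; apply/andP; split; lra.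
have taK : forall z, lincond L z -> K (torus_add y z).
  move=> z hz; split; first by move=> i; rewrite mxE frac01.
  by apply/(ta_lincond L y z yl).
have hbj : forall z, K z -> (pbox R j (torus_add y z) <-> pbox R j0 z).
  move=> z zK; split => hb i.
    have := hb i; rewrite mxE hj /y mxE => hc.
    exact: (coord_shift_inv (zK.1 i) hc).
  rewrite mxE hj /y mxE; exact: coord_shift (hb i).
have PK : P `&` K = pbox R j0 `&` K.
  apply/funext => z; apply/propext; split => -[hz zK]; split => //.
    by move: hz; rewrite /P /B /preimage /= => -[hb _]; apply/(hbj z zK).
  rewrite /P /B /preimage /=; split; first by apply/(hbj z zK).
  exact: taK zK.2.
have cK : mu (~` K) = 0%E.
  have h := @probability_setC _ _ _ mu K mK; move: h; rewrite hmu.1 subee //.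
have nK : mu (P `\` K) = 0%E.
  apply/eqP; rewrite eq_le measure_ge0 andbT -cK.
  apply: le_measure; rewrite ?inE; [exact: measurableD|exact: measurableC|].
  by move=> z [].
have e1 : mu P = mu (P `&` K).
  have h := measureDI mu mP mK.
  transitivity (mu (P `\` K) + mu (P `&` K))%E; first exact: h.
  by rewrite nK add0e.
change (mu B = mu (pbox R j0 `&` K)); by rewrite -PK -e1 -eP.
Qed.
End Inv.

Arguments mopen {R m}. Arguments coord_cont {R m}. Arguments sum_cont {R m I}.
Arguments lin_cont {R m}. Arguments m_lt {R m}. Arguments m_gt {R m}.
Arguments m_ge {R m}. Arguments m_le {R m}. Arguments m_eq {R m}.
Arguments m_fin {R m k}. Arguments m_int {R m}.
Arguments Lsum {R r m} L a z. Arguments lincond {R r m} L.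
Arguments m_lincond {R r m} L. Arguments m_unit {R m}. Arguments m_kerT {R r m} L.
Arguments m_pbox {R m p} j. Arguments m_cellf {R m}. Arguments kerTE {R r m} L.
Arguments cell_exists {R p t}. Arguments pmeas_cell {R p A}.
Lemma in_bigsetU (I : eqType) (T : Type) (s : seq I) (G : I -> set T) x :
  (\big[setU/set0]_(i <- s) G i) x <-> exists i, i \in s /\ G i x.
Proof.
elim: s => [|a s IH]; first by rewrite big_nil; split => // -[i []].
rewrite big_cons; split.
  case=> [h|/IH [i [hi h]]]; first by exists a; rewrite mem_head.
  by exists i; rewrite in_cons hi orbT.
case=> i []; rewrite in_cons => /orP[/eqP->|hi] h; first by left.
by right; apply/IH; exists i.
Qed.
Section Decomp.
Variables (R : realType) (r m : nat) (L : 'M[int]_(r, m)) (p : nat).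
Hypothesis p0 : (0 < p)%N.
Local Notation T := (borelRv R m).
Variable (mu : probability T R).
Lemma decomp (A : 'I_m -> set R) : (forall i, p_measurable p (A i)) ->
  S_T L mu A = (\sum_(j : {ffun 'I_m -> 'I_p} | [forall i, j i \in discretize p (A i)])
                 box_mass L mu j)%E.
Proof.
move=> hA.
set Pset := [set j : {ffun 'I_m -> 'I_p} | [forall i, j i \in discretize p (A i)]]%SET.
set n := #|Pset|.
set G : 'I_n -> set T := fun k => pbox R (enum_val k : {ffun 'I_m -> 'I_p}) `&` kerT R L.
have SE : ([set x : T | forall i, A i (x ord0 i)] `&` (kerT R L : set T)) = \big[setU/set0]_(k < n) G k.
  apply/funext => x; apply/propext; rewrite in_bigsetU; split.
    case=> hx xK.
    have [jf hjf] := @fin_all_exists _ (fun _ => 'I_p) (fun i (y : 'I_p) => cell p (x ord0 i) y)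
      (fun i => cell_exists p0 (xK.1 i)).
    have jP : [ffun i => jf i] \in Pset.
      rewrite inE; apply/forallP => i; rewrite ffunE.
      by apply/(pmeas_cell (hA i) p0 (jf i) _ (hjf i)).
    exists (enum_rank_in jP [ffun i => jf i]); split; first exact: mem_index_enum.
    rewrite /G enum_rankK_in //; split => // i; rewrite ffunE; exact: hjf.
  case=> k [_ [hb xK]]; split => // i.
  have := enum_valP k; rewrite inE => /forallP /(_ i) hi.
  by apply/(pmeas_cell (hA i) p0 _ _ (hb i)).
transitivity (\sum_(j in Pset) box_mass L mu j)%E; last by apply: eq_bigl => j; rewrite inE.
rewrite (big_enum_val (fun j : {ffun 'I_m -> 'I_p} => box_mass L mu j)) /=.
rewrite /S_T SE measure_bigsetU_ord.
- done.
- move=> k; apply: measurableI; [exact: m_pbox | exact: m_kerT].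
- move=> k1 k2 _ _ [x [[h1 _] [h2 _]]]; apply: enum_val_inj; apply/ffunP => i.
  apply/val_inj; exact: (cell_uniq p0 (h1 i) (h2 i)).
Qed.
End Decomp.

Arguments Lsum {R r m} L a z. Arguments lincond {R r m} L.
Arguments cell_exists {R p t}. Arguments pmeas_cell {R p A}.
Section Resid.
Variables (R : realType) (r m : nat) (L : 'M[int]_(r, m)) (p : nat).
Hypothesis p0 : (0 < p)%N.
Lemma residue (j : 'I_m -> 'I_p) (z : 'rV[R]_m) : pbox R j z -> kerT R L z ->
  forall a, exists n : int, (`|n| <= \sum_i `|L a i|)%N /\
     (p%:Z %| \sum_i L a i * (j i)%:Z + n)%Z.
Proof.
move=> hb [_ hl] a; have [w hw] := hl a.
set S := \sum_i L a i * (j i)%:Z.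
exists (p%:Z * w - S); split; last first.
  by rewrite addrC subrK; apply: dvdz_mulr.
have pR : 0 < (p%:R : R) by rewrite ltr0n.
have e : ((p%:Z * w - S)%:~R : R) = \sum_i (L a i)%:~R * (p%:R * z ord0 i - (j i)%:R).
  rewrite rmorphB rmorphM /= -hw /Lsum /S rmorph_sum mulr_sumr -sumrB; apply: eq_bigr => i _.
  by rewrite rmorphM /= -pmulrn mulrBr mulrCA.
have hd : forall i, 0 <= p%:R * z ord0 i - (j i)%:R < 1.
  move=> i; have [h1 h2] := hb i.
  rewrite ler_pdivrMr // in h1; rewrite ltr_pdivlMr // in h2.
  rewrite -natr1 in h2; apply/andP; split; lra.
have hn : `|((p%:Z * w - S)%:~R : R)| <= (\sum_i `|L a i|%N)%:R.
  rewrite e natr_sum; apply: (le_trans (ler_norm_sum _ _ _)); apply: ler_sum => i _.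
  rewrite normrM natr_absz intr_norm; have /andP[d0 d1] := hd i.
  rewrite -[X in _ <= X]mulr1 ler_wpM2l // ?normr_ge0 //.
  by rewrite ger0_norm // ltW.
rewrite -(ler_nat R) natr_absz intr_norm; exact: hn.
Qed.
End Resid.

Arguments Lsum {R r m} L a z. Arguments lincond {R r m} L.
Arguments cell_exists {R p t}. Arguments pmeas_cell {R p A}.
Section Asm.
Variables (R : realType) (r m : nat) (L : 'M[int]_(r, m)) (p' : nat).
Local Notation p := p'.+1.
Hypothesis pr : prime p.
Local Notation F := 'F_p.
Local Notation Tj := {ffun 'I_m -> 'I_p}.
Definition SF a (j : Tj) : F := \sum_i (L a i)%:~R * (j i)%:R.
Lemma SF_int a (j : Tj) : ((\sum_i L a i * (j i)%:Z)%:~R : F) = SF a j.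
Proof. by rewrite rmorph_sum; apply: eq_bigr => i _; rewrite rmorphM /= -pmulrn. Qed.
Lemma SF_add a (j x : Tj) : SF a (j + x) = SF a j + SF a x.
Proof.
rewrite /SF -big_split; apply: eq_bigr => i _; rewrite ffunE /= -mulrDr; congr (_ * _).
by rewrite -natrD -[in RHS](Fp_nat_mod pr).
Qed.
Lemma SF_sub a (j x : Tj) : SF a (j - x) = SF a j - SF a x.
Proof. have := SF_add a (j - x) x; rewrite subrK => ->; by rewrite addrK. Qed.
Lemma kerZp_SF (x : Tj) : (x \in kerZp p L) = [forall a, SF a x == 0].
Proof.
rewrite inE; apply/forallP/forallP => h a; have := h a; by rewrite -SF_int Fp_intr_eq0.
Qed.
Variable C : nat.
Hypothesis hC : (C.*2 < p)%N.
Local Notation CC := {ffun 'I_r -> 'I_(C.*2.+1)}.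
Definition cls (c : CC) (j : Tj) : bool :=
  [forall a, SF a j + ((c a)%:Z - C%:Z)%:~R == 0].
Lemma cls_uniq c c' j : cls c j -> cls c' j -> c = c'.
Proof.
move=> /forallP h /forallP h'; apply/ffunP => a; apply/val_inj.
have := h a; have := h' a; rewrite !addr_eq0 => /eqP e1 /eqP e2.
have : ((((c a)%:Z - C%:Z) - ((c' a)%:Z - C%:Z))%:~R : F) == 0.
  by rewrite rmorphB /= -(opprK ((c a)%:Z - C%:Z)%:~R) -e2 e1 opprK subrr.
have -> : (((c a)%:Z - C%:Z) - ((c' a)%:Z - C%:Z)) = (c a)%:Z - (c' a)%:Z by ring.
rewrite Fp_intr_eq0 // /dvdz => hd.
have lc := ltn_ord (c a); have lc' := ltn_ord (c' a).
set d := `|(c a)%:Z - (c' a)%:Z|%N in hd.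
have dle : (d <= C.*2)%N by rewrite /d; lia.
have d0 : d = 0%N.
  apply/eqP; apply: contraTT hd => dn0; rewrite /dvdn; apply/negP => /eqP hm.
  have : (p <= d)%N by apply: dvdn_leq; [lia| apply/eqP].
  lia.
by move/eqP: d0; rewrite absz_eq0 subr_eq0 => /eqP [] .
Qed.
Lemma cls_shift c (j0 x : Tj) : cls c j0 -> cls c (j0 + x) = (x \in kerZp p L).
Proof.
move=> /forallP h; rewrite kerZp_SF.
have key : forall a, SF a (j0 + x) + ((c a)%:Z - C%:Z)%:~R = SF a x.
  by move=> a; rewrite SF_add addrAC (eqP (h a)) add0r.
by apply/forallP/forallP => h' a; have := h' a; rewrite key.
Qed.
Lemma cls_sub c (j0 j : Tj) : cls c j0 -> cls c j -> (j - j0) \in kerZp p L.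
Proof. by move=> h0 h; rewrite -(cls_shift c j0 (j - j0) h0) addrC subrK. Qed.
Section WithMu.
Variable (mu : probability (borelRv R m) R).
Hypothesis hCr : forall a, (\sum_i `|L a i| <= C)%N.
Lemma cls_exists (j : Tj) : (0 < box_mass L mu j)%E -> exists c, cls c j.
Proof.
move=> hpos.
have [z [hz zK]] : exists z, (pbox R j `&` kerT R L) z.
  apply/not_existsP => hn; move: hpos; rewrite /box_mass.
  have -> : (pbox R j `&` kerT R L) = set0 by apply/funext => z; apply/propext; split => // /hn.
  by rewrite measure0 ltxx.
have hres := @residue R r m L p (ltn0Sn p') j z hz zK.
have [nf hnf] := @fin_all_exists _ (fun _ => int)
  (fun a (n : int) => (`|n| <= \sum_i `|L a i|)%N /\ (p%:Z %| \sum_i L a i * (j i)%:Z + n)%Z) hres.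
exists [ffun a => inord (absz (nf a + C%:Z))]; apply/forallP => a; rewrite ffunE.
have [h1 h2] := hnf a; have h3 := hCr a.
have nC : (0 <= nf a + C%:Z) by lia.
rewrite inordK; last by lia.
rewrite gez0_abs // addrK -SF_int -rmorphD /= Fp_intr_eq0 //.
Qed.
End WithMu.
End Asm.

Theorem lemma2p5 (R : realType) (r m : nat) (L : 'M[int]_(r, m))
    (hrank : \rank (map_mx (intr : int -> rat) L) = r)
    (mu : probability (borelRv R m) R) (hmu : is_haar_kerT L mu) :
  exists (KL p0 : nat), (0 < KL)%N /\
    forall p : nat, prime p -> (p0 <= p)%N ->
    forall A : 'I_m -> set R, (forall i, p_measurable p (A i)) ->
    exists (K : nat) (js : 'I_K -> ('I_m -> 'I_p)),
      (K <= KL)%N /\ (forall k, in_J L mu (js k)) /\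
      S_T L mu A =
        (\sum_(k < K)
           ((p%:R ^+ (m - r) : R)%:E * box_mass L mu (js k)) *
           (S_Zp p L (fun i => zp_shift (discretize p (A i)) (js k i)))%:E)%E.
Proof.
have [D hD] := rank_modp _ _ L hrank.
set C := (\sum_(a < r) \sum_(i < m) `|L a i|)%N.
have hCr : forall a, (\sum_i `|L a i| <= C)%N.
  by move=> a; rewrite /C (bigD1 a) //= leq_addr.
exists ((C.*2.+1) ^ r)%N, (D + C.*2 + 2)%N; split; first by rewrite expn_gt0.
case=> [|p'] pr; first by [].
move=> hp A hA.
have hC : (C.*2 < p'.+1)%N by lia.
have p0 : (0 < p'.+1)%N by [].
have hrF := hD _ pr (ltac:(lia)).
have hker := card_kerZp _ _ _ L pr hrF.
set M := fun j : {ffun 'I_m -> 'I_p'.+1} => box_mass L mu j.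
set pos := fun j : {ffun 'I_m -> 'I_p'.+1} => (0 < M j)%E.
set cl := @cls r m L p' C.
set G := [set c : {ffun 'I_r -> 'I_(C.*2.+1)} | [exists j : {ffun 'I_m -> 'I_p'.+1}, cl c j && pos j]]%SET.
set rep := fun c : {ffun 'I_r -> 'I_(C.*2.+1)} => if [pick j : {ffun 'I_m -> 'I_p'.+1} | cl c j && pos j] is Some j then j else (0 : {ffun 'I_m -> 'I_p'.+1}).
have repP : forall c, c \in G -> cl c (rep c) && pos (rep c).
  move=> c; rewrite inE => /existsP [j hj]; rewrite /rep.
  by case: pickP => [j' //|/(_ j)]; rewrite hj.
exists #|G|, (fun k => (rep (enum_val k) : 'I_m -> 'I_p'.+1)); split.
  apply: leq_trans (max_card _) _; by rewrite card_ffun !card_ord.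
split.
  by move=> k; have /andP[_ h] := repP _ (enum_valP k).
set Tsum := fun j : {ffun 'I_m -> 'I_p'.+1} =>
  (((p'.+1)%:R ^+ (m - r) : R)%:E * M j *
    (S_Zp p'.+1 L (fun i => zp_shift (discretize p'.+1 (A i)) (j i)))%:E)%E.
transitivity (\sum_(c in G) Tsum (rep c))%E; last by rewrite big_enum_val.
rewrite (@decomp R r m L p'.+1 p0 mu A hA).
set Inn := fun j : {ffun 'I_m -> 'I_p'.+1} => [forall i, j i \in discretize p'.+1 (A i)].
have M0 : forall j, ~~ pos j -> M j = 0%E.
  move=> j hj; apply/eqP; rewrite eq_le; apply/andP; split; last exact: measure_ge0.
  by rewrite leNgt.
rewrite (bigID pos) /= [X in (_ + X)%E]big1 ?adde0; last by move=> j /andP[_ /M0].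
set cof := fun j : {ffun 'I_m -> 'I_p'.+1} =>
  if [pick c : {ffun 'I_r -> 'I_(C.*2.+1)} | cl c j] is Some c then c else (0 : {ffun 'I_r -> 'I_(C.*2.+1)}).
have cofE : forall j c, cl c j -> cof j = c.
  move=> j c hc; rewrite /cof; case: pickP => [c' hc'|/(_ c)]; last by rewrite hc.
  exact: (cls_uniq _ _ L p' pr C hC _ _ _ hc' hc).
have cofP : forall j, pos j -> cl (cof j) j.
  move=> j hj; have [c hc] := @cls_exists R r m L p' pr C hC mu hCr j hj.
  by rewrite (cofE _ _ hc).
rewrite (partition_big cof (mem G)) /=; last first.
  move=> j /andP[_ hj]; rewrite inE; apply/existsP; exists j; rewrite cofP //.
apply: eq_bigr => c cG.
have /andP[cr pr0] := repP c cG.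
set j0 := rep c in cr pr0 *.
have Mshift : forall x, x \in kerZp p'.+1 L -> M (j0 + x) = M j0.
  move=> x hx; apply: (@mass_shift R r m L p'.+1 p0 mu hmu j0 x (j0 + x)).
    by move: hx; rewrite inE => /forallP.
  move=> i; rewrite ffunE; reflexivity.
have jE : forall j : {ffun 'I_m -> 'I_p'.+1}, j = j0 + (j - j0) by move=> j; rewrite addrC subrK.
rewrite (eq_bigl (fun j => Inn j && ((j - j0) \in kerZp p'.+1 L))); last first.
  move=> j; apply/idP/idP.
    case/andP=> /andP[hI hpos] /eqP hc; apply/andP; split => //.
    apply: (cls_sub _ _ L p' pr C c j0 j cr); rewrite -hc; exact: cofP.
  case/andP=> hI hx.
  have hcl : cl c j.
    by have := cls_shift _ _ L p' pr C c j0 (j - j0) cr; rewrite hx -jE.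
  apply/andP; split; first (apply/andP; split => //).
    by rewrite /pos (jE j) Mshift.
  by apply/eqP; apply: cofE.
rewrite (reindex_inj (addrI j0)) /=.
set QS := [set x : {ffun 'I_m -> 'I_p'.+1} | Inn (j0 + x) && (x \in kerZp p'.+1 L)]%SET.
rewrite (eq_bigl (fun x => x \in QS)); last first.
  by move=> x; rewrite /QS inE addrAC subrr add0r.
transitivity (\sum_(x in QS) M j0)%E.
  by apply: eq_bigr => x; rewrite /QS inE => /andP[_ hx]; exact: Mshift.
have fM : M j0 \is a fin_num.
  rewrite ge0_fin_numE ?measure_ge0 //; apply: (le_lt_trans (probability_le1 _ _)); last exact: ltey.
  by apply: measurableI; [exact: m_pbox | exact: m_kerT].
have hz : forall (x : {ffun 'I_m -> 'I_p'.+1}) B i, (x i \in zp_shift B (j0 i)) = ((j0 + x) i \in B).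
  move=> x B i; rewrite inE; apply/existsP/idP => [[y /andP[yB /eqP hy]]|h].
    have -> : (j0 + x) i = y; last by [].
    by apply/val_inj; rewrite ffunE /= hy addnC; reflexivity.
  exists ((j0 + x) i); rewrite h /=; apply/eqP; rewrite ffunE addnC; reflexivity.
have eQ : [set x in kerZp p'.+1 L | [forall i, x i \in zp_shift (discretize p'.+1 (A i)) (j0 i)]]%SET = QS.
  apply/setP => x; rewrite !inE andbC; congr (_ && _).
  by apply: eq_forallb => i; rewrite hz.
rewrite /Tsum /S_Zp hker eQ -[M j0](fineK fM) sumEFin sumr_const -!EFinM; congr EFin.
have hP : (p'.+1%:R ^+ (m - r) : R) != 0 by rewrite expf_neq0 // pnatr_eq0.
have e : forall a0 b0 c0 : R, a0 != 0 -> a0 * b0 * (c0 / a0) = b0 * c0.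
  by move=> a0 b0 c0 ha0; rewrite mulrC mulrA mulfVK // mulrC.
by rewrite natrX e // mulr_natr.
Qed.
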